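(* Let $N$ be a finite $\Lambda$-module and $l>0$ an integer. There exists a $\Lambda$-module $M$ containing $N$ as a $\Lambda$-submodule with $(1-t)M=N$ and $|M/N|=l$ if and only if $|N/(1-t)N|$ divides $l$.
   Context: $\Lambda=\mathbb Z[t,t^{-1}]$, the ring of Laurent polynomials over $\mathbb Z$. A $\Lambda$-module is an abelian group with an automorphism by which $t$ acts. *)

(* Defs.v *)
From HB Require Import structures.
From mathcomp Require Import all_boot all_order all_algebra.
Set Implicit Arguments. Unset Strict Implicit. Unset Printing Implicit Defensive.
Import GRing.Theory.
Local Open Scope ring_scope.

(* A Lambda-module (Lambda = Z[t,t^-1]) is an abelian group M with an
   automorphism t: an additive bijection M -> M. *)
Definition lambda_aut (M : zmodType) (t : M -> M) : Prop :=
  (forall x y : M, t (x + y) = t x + t y) /\ bijective t.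

(* f : N -> M is an injective Lambda-module homomorphism (so N is identified
   with the Lambda-submodule f(N) of M). *)
Definition lambda_embedding (N M : zmodType) (tN : N -> N) (tM : M -> M)
  (f : N -> M) : Prop :=
  (forall x y : N, f (x + y) = f x + f y) /\ injective f /\
  (forall x : N, f (tN x) = tM (f x)).

(* |M / S| = l, for an arbitrary (possibly infinite) abelian group M and a
   subgroup S (given as a predicate): there is a system r_0, ..., r_(l-1)
   of representatives of the cosets of S, each coset hit exactly once. *)
Definition quot_card (M : zmodType) (S : M -> Prop) (l : nat) : Prop :=
  exists r : 'I_l -> M, forall m : M, exists! i : 'I_l, S (m - r i).

(* Main.v *)
Require Import Defs.
From HB Require Import structures.
From mathcomp Require Import all_boot all_order all_algebra all_fingroup.
From mathcomp Require Import zify.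
Set Implicit Arguments. Unset Strict Implicit. Unset Printing Implicit Defensive.
Import GRing.Theory.
Local Open Scope ring_scope.

Section Ext.
Variables (A : finZmodType) (c : nat) (n0 : A).
Definition ext : Type := (fun _ : A => (A * 'I_c.+1)%type) n0.
HB.instance Definition _ := Finite.on ext.

Definition enorm (a : A) (s : nat) : ext :=
  (a + n0 *+ (s %/ c.+1), Ordinal (ltn_pmod s (ltn0Sn c))).
Definition eadd (u v : ext) : ext := enorm (u.1 + v.1) (u.2 + v.2).
Definition eopp (u : ext) : ext :=
  (- u.1 - n0 *+ (0 < u.2)%N, Ordinal (ltn_pmod (c.+1 - u.2) (ltn0Sn c))).
Definition ezero : ext := (0, ord0).

Lemma enormE a s (u : ext) : eadd (enorm a s) u = enorm (a + u.1) (s + u.2).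
Proof.
rewrite /eadd /enorm /=; congr pair; last by apply: val_inj; rewrite /= modnDml.
rewrite -!addrA [n0 *+ _ + (_ + _)]addrCA -mulrnDr; congr (_ + (_ + _ *+ _)).
by rewrite [in RHS](divn_eq s c.+1) -addnA divnMDl.
Qed.

Lemma eaddC : commutative eadd.
Proof. by move=> u v; rewrite /eadd addrC addnC. Qed.

Lemma eaddA : associative eadd.
Proof.
move=> u v w; rewrite [eadd u (eadd _ _)]eaddC [eadd v w]/eadd [eadd u v]/eadd !enormE.
by rewrite addrC addrA addnC addnA.
Qed.

Lemma eadd0 : left_id ezero eadd.
Proof.
case=> a i; rewrite /eadd /enorm /= !add0r add0n divn_small // addr0.
by congr pair; apply: val_inj; rewrite /= modn_small.
Qed.

Lemma eaddN : left_inverse ezero eopp eadd.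
Proof.
case=> a [i hi]; rewrite /eadd /enorm /=; congr pair; last first.
  apply: val_inj => /=; case: i hi => [|i] hi; first by rewrite subn0 modnn addn0 mod0n.
  by rewrite (modn_small (m:=c.+1 - i.+1)) ?ltn_subrL // subnK ?modnn // ltnW.
case: i hi => [|i] hi /=.
  by rewrite subn0 modnn addn0 div0n mulr0n subr0 addNr addr0.
rewrite (modn_small (m:=c.+1 - i.+1)) ?ltn_subrL // subnK ?divnn /=; last exact: ltnW.
by rewrite mulr1n [- a - n0 + a]addrAC addNr add0r addNr.
Qed.

HB.instance Definition _ := GRing.isZmodule.Build ext eaddA eaddC eadd0 eaddN.

Lemma eaddE (u v : ext) : u + v = eadd u v. Proof. by []. Qed.
Lemma eoppE (u : ext) : - u = eopp u. Proof. by []. Qed.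
Lemma ezeroE : (0 : ext) = ezero. Proof. by []. Qed.

Lemma card_ext : #|{: ext}| = (#|A| * c.+1)%N.
Proof. by rewrite card_prod card_ord. Qed.
End Ext.

Section Additive.
Variables (A B : zmodType) (f : A -> B) (hf : forall x y, f (x + y) = f x + f y).
Lemma add_f0 : f 0 = 0.
Proof. by apply/eqP; rewrite -(addrI (f 0) (_ : f 0 + f 0 = f 0 + 0)) // -hf !addr0. Qed.
Lemma add_fN x : f (- x) = - f x.
Proof. by apply: (addrI (f x)); rewrite -hf !subrr add_f0. Qed.
Lemma add_fB x y : f (x - y) = f x - f y.
Proof. by rewrite hf add_fN. Qed.
Lemma add_fMn x k : f (x *+ k) = f x *+ k.
Proof. by elim: k => [|k IH]; rewrite ?add_f0 // !mulrS hf IH. Qed.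
End Additive.

Section ExtT.
Variables (A : finZmodType) (c : nat) (n0 : A) (tA : A -> A) (x : A).
Hypothesis tA_add : forall a b, tA (a + b) = tA a + tA b.
Hypothesis tA_inj : injective tA.
Hypothesis hn0 : n0 - tA n0 = x *+ c.+1.

Definition etr (u : @ext A c n0) : @ext A c n0 := (tA u.1 - x *+ u.2, u.2).
Definition eemb (a : A) : @ext A c n0 := (a, ord0).

Lemma eemb_add a b : eemb (a + b) = eemb a + eemb b.
Proof.
rewrite eaddE /eadd /enorm /= div0n mulr0n addr0; congr pair.
by apply: val_inj; rewrite /= mod0n.
Qed.

Lemma eemb_inj : injective eemb.
Proof. by move=> a b []. Qed.

Lemma eemb_t a : eemb (tA a) = etr (eemb a).
Proof. by rewrite /etr /= mulr0n subr0. Qed.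

Lemma etr_add u v : etr (u + v) = etr u + etr v.
Proof.
rewrite !eaddE /eadd /enorm /etr /=; congr pair.
set s := (u.2 + v.2)%N.
rewrite !tA_add add_fMn //.
have -> : tA n0 = n0 - x *+ c.+1 by rewrite -hn0 opprB addrC subrK.
rewrite mulrnBl -mulrnA.
have hs : s = (c.+1 * (s %/ c.+1) + s %% c.+1)%N by rewrite mulnC -divn_eq.
rewrite addrA -[X in X = _]addrA -opprD -mulrnDr -hs.
rewrite (addrACA (tA u.1)) -opprD -mulrnDr -/s.
by rewrite addrAC.
Qed.

Lemma etr_inj : injective etr.
Proof.
case=> a i [b j]; rewrite /etr /= => -[h1 h2]; subst j.
by move: h1 => /addIr /tA_inj ->.
Qed.

Lemma ephi (u : @ext A c n0) : u - etr u = eemb (u.1 - tA u.1 + x *+ u.2).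
Proof.
case: u => a [i hi]; rewrite eaddE eoppE /eadd /eopp /enorm /etr /eemb /=.
congr pair; last first.
  apply: val_inj => /=; case: i hi => [|i] hi; first by rewrite subn0 modnn mod0n.
  by rewrite (modn_small (m:=c.+1 - i.+1)) ?ltn_subrL // subnKC ?modnn // ltnW.
case: i hi => [|i] hi /=.
  by rewrite subn0 modnn addn0 div0n !mulr0n !subr0 addr0.
rewrite (modn_small (m:=c.+1 - i.+1)) ?ltn_subrL // subnKC ?divnn /=; last exact: ltnW.
by rewrite mulr1n addrA subrK opprB addrA addrAC.
Qed.
End ExtT.



Lemma step (A : finZmodType) (tA : A -> A) (hA : lambda_aut tA) (c : nat)
  (x n0 : A) (hn0 : n0 - tA n0 = x *+ c.+1) :
  exists (B : finZmodType) (tB : B -> B) (g : A -> B),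
  [/\ lambda_aut tB, lambda_embedding tA tB g, #|B| = (#|A| * c.+1)%N,
      (forall a (i : 'I_c.+1), exists b : B, b - tB b = g (a - tA a + x *+ i)) &
      forall b : B, exists a (i : 'I_c.+1),
        b - tB b = g (a - tA a + x *+ i) /\ ((i : nat) = 0%N -> b = g a)].
Proof.
case: hA => tadd /bij_inj tinj.
exists (@ext A c n0), (etr tA x), (@eemb A c n0); split.
- split; first exact: etr_add.
  by apply: injF_bij; apply: etr_inj.
- split; first exact: eemb_add.
  by split; [exact: eemb_inj | exact: eemb_t].
- exact: card_ext.
- by move=> a i; exists (a, i); rewrite ephi.
case=> a i; exists a, i; split; first exact: ephi.
by case: i => [[|i] hi] //= _; rewrite /eemb; congr pair; apply: val_inj.
Qed.

Lemma card_fib (A : finZmodType) (p : A -> A)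
  (hp : forall a b, p (a + b) = p a + p b) :
  #|A| = (#|[set p a | a : A]| * #|[set a : A | p a == 0%R]|)%N.
Proof.
transitivity (\sum_(a : A) 1)%N; first by rewrite sum1_card.
rewrite (partition_big p (mem [set p a | a : A])) /=; last first.
  by move=> a _; apply: imset_f.
rewrite -sum_nat_const; apply: eq_bigr => j /imsetP [a0 _ ->].
rewrite sum1dep_card.
have -> : [set i | true && (p i == p a0)] = [set a0 + k | k in [set a : A | p a == 0%R]].
  apply/setP => i; rewrite !inE /=; apply/eqP/imsetP.
    move=> h; exists (i - a0); first by rewrite inE add_fB // h subrr.
    by rewrite addrC subrK.
  by case=> k; rewrite inE => /eqP hk ->; rewrite hp hk addr0.
by rewrite card_imset //; apply: addrI.
Qed.


Lemma quot_card_fin (N M : finZmodType) (f : N -> M)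
  (hadd : forall x y, f (x + y) = f x + f y) (hinj : injective f) (l : nat) :
  #|M| = (l * #|N|)%N -> quot_card (fun m : M => exists n : N, m = f n) l.
Proof.
move=> hM.
pose H := [set f n | n : N].
have memH m : (exists n, m = f n) <-> m \in H.
  by split; [case=> n ->; apply: imset_f | case/imsetP=> n _ ->; exists n].
have H0 : 0 \in H by apply/imsetP; exists 0 => //; rewrite add_f0.
have HB a b : a \in H -> b \in H -> a - b \in H.
  case/imsetP=> n _ -> /imsetP [n' _ ->]; apply/imsetP; exists (n - n') => //.
  by rewrite add_fB.
have HD a b : a \in H -> b \in H -> a + b \in H.
  by move=> ha hb; rewrite -[b]opprK HB // -[- b]add0r HB.
pose crep m := odflt 0 [pick m' | m - m' \in H].
have crepH m : m - crep m \in H.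
  rewrite /crep; case: pickP => [m' //|/(_ m)]; by rewrite subrr H0.
have crep_eq m m2 : m - m2 \in H -> crep m = crep m2.
  move=> h; rewrite /crep (@eq_pick _ _ (fun m' => m2 - m' \in H)) //.
  move=> m' /=; apply/idP/idP => h'.
    have -> : m2 - m' = (m - m') - (m - m2) by rewrite opprB [RHS]addrC addrA subrK.
    exact: HB.
  have -> : m - m' = (m - m2) + (m2 - m') by rewrite addrA subrK.
  exact: HD.
have crep_idem m : crep (crep m) = crep m by rewrite -(crep_eq _ _ (crepH m)).
have crepP m m0 : (crep m == crep m0) = (m - m0 \in H).
  apply/eqP/idP => [h|]; last exact: crep_eq.
  have -> : m - m0 = (m - crep m) - (m0 - crep m0) by rewrite h opprB addrA subrK.
  by apply: HB.
pose R := [set crep m | m : M].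
have cardH : #|H| = #|N| by rewrite card_imset.
have hR : #|R| = l.
  apply/eqP; rewrite -(@eqn_pmul2r #|N|); last by apply/card_gt0P; exists 0.
  rewrite -hM; apply/eqP; symmetry.
  transitivity (\sum_(a : M) 1)%N; first by rewrite sum1_card.
  rewrite (partition_big crep (mem R)) /=; last by move=> a _; apply: imset_f.
  rewrite -sum_nat_const; apply: eq_bigr => j /imsetP [a0 _ ->].
  rewrite sum1dep_card -cardH.
  have -> : [set i | true && (crep i == crep a0)] = [set a0 + k | k in H].
    apply/setP => i; rewrite !inE /= crepP; apply/idP/imsetP.
      by move=> h; exists (i - a0) => //; rewrite addrC subrK.
    by case=> k hk ->; rewrite addrAC subrr add0r.
  by rewrite card_imset //; apply: addrI.
have crepR m : crep m \in R by apply: imset_f.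
exists (fun i => enum_val (cast_ord (esym hR) i)) => m.
exists (cast_ord hR (enum_rank_in (crepR m) (crep m))); split.
  rewrite cast_ordK enum_rankK_in //; apply/memH; exact: crepH.
move=> j /memH hj.
have hjR : enum_val (cast_ord (esym hR) j) \in R by apply: enum_valP.
have e : enum_val (cast_ord (esym hR) j) = crep m.
  case/imsetP: hjR => m' _ e; rewrite e -crep_idem -e; symmetry.
  by apply: crep_eq.
rewrite -[j](cast_ordKV hR); congr cast_ord.
by apply: enum_val_inj; rewrite e enum_rankK_in.
Qed.

Lemma mulrn_ord (A : finZmodType) (x : A) : exists2 k, (0 < k)%N & x *+ k = 0.
Proof.
exists #[x]%g; first exact: order_gt0.
have := expg_order x; move=> h; exact: h.
Qed.

Lemma one_step (N : finZmodType) (tN : N -> N) (A : finZmodType) (tA : A -> A)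
  (f : N -> A) (hA : lambda_aut tA) (hf : lambda_embedding tN tA f)
  (h1 : forall a, exists n, a - tA a = f n)
  (h2 : forall a, a - tA a = 0 -> exists n, a = f n)
  (n : N) (hn : forall a, f n != a - tA a) :
  exists (B : finZmodType) (tB : B -> B) (g : N -> B),
   [/\ lambda_aut tB, lambda_embedding tN tB g,
       (forall b, exists n, b - tB b = g n),
       (forall b, b - tB b = 0 -> exists n, b = g n) &
       (#|N| - #|[set (b - tB b)%R | b : B]| < #|N| - #|[set (a - tA a)%R | a : A]|)%N].
Proof.
have hA' := hA; case: hA' => tadd /bij_inj tinj.
case: hf => fadd [finj ft].
set x := f n.
pose P i := (0 < i)%N && [exists a, x *+ i == a - tA a].
have exP : exists i, P i.
  case: (mulrn_ord x) => k k0 hk; exists k; rewrite /P k0 /=.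
  by apply/existsP; exists 0; rewrite hk add_f0 // subr0.
case: (ex_minnP exP) => c /andP [c0 /existsP [n0 /eqP hn0]] cmin.
have c1 : (1 < c)%N.
  rewrite ltn_neqAle c0 andbT; apply/eqP => e; move: hn0; rewrite -e mulr1n.
  by move/eqP; rewrite (negbTE (hn n0)).
move: hn0 cmin c1 c0; case: c => [//|c'] hn0 cmin c1 _.
case: (step hA (esym hn0)) => B [tB [g [hB hg cardB hsur hphi]]].
have hB' := hB; case: hB' => tBadd _.
case: hg => gadd [ginj gt].
exists B, tB, (g \o f); split => //.
- split; first by move=> u v /=; rewrite fadd gadd.
  split; first exact: inj_comp.
  by move=> u /=; rewrite ft gt.
- move=> b; case: (hphi b) => a [i [-> _]].
  case: (h1 a) => n1 ->; exists (n1 + n *+ i) => /=.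
  by rewrite fadd (add_fMn fadd).
- move=> b hb; case: (hphi b) => a [i [e hi0]].
  have e0 : a - tA a + x *+ i = 0.
    by apply: ginj; rewrite -e hb add_f0.
  case: (posnP i) => [i0|ipos].
    rewrite hi0 //; move: e0; rewrite i0 mulr0n addr0 => /h2 [n1 ->].
    by exists n1.
  have : P i.
    rewrite /P ipos /=; apply/existsP; exists (- a).
    rewrite (add_fN tadd) opprK; apply/eqP.
    have h : x *+ i = - (a - tA a) by apply/eqP; rewrite -addr_eq0 addrC e0.
    by rewrite h opprB addrC.
  by move/cmin; rewrite leqNgt ltn_ord.
set KA := [set a - tA a | a : A].
set KB := [set b - tB b | b : B].
have sub1 : g @: KA \proper KB.
  apply/properP; split.
    apply/subsetP => _ /imsetP [_ /imsetP [a _ ->] ->].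
    by apply/imsetP; exists (g a) => //; rewrite add_fB // gt.
  case: (hsur 0 (Ordinal c1)) => b hb.
  exists (g x).
    by apply/imsetP; exists b => //; rewrite hb /= add_f0 // subr0 add0r mulr1n.
  apply/imsetP => -[k /imsetP [a _ ->] /ginj e].
  by move: (hn a); rewrite -/x e eqxx.
have hlt : (#|KA| < #|KB|)%N.
  by move: (proper_card sub1); rewrite card_imset //.
have hle : (#|KB| <= #|N|)%N.
  apply: (@leq_trans #|[set (g \o f) n | n : N]|).
    apply: subset_leq_card; apply/subsetP => _ /imsetP [b _ ->].
    case: (hphi b) => a [i [-> _]]; case: (h1 a) => n1 ->.
    by apply/imsetP; exists (n1 + n *+ i) => //=; rewrite fadd (add_fMn fadd).
  exact: leq_imset_card.
lia.
Qed.

Lemma iterate (N : finZmodType) (tN : N -> N) (k : nat) :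
  forall (A : finZmodType) (tA : A -> A) (f : N -> A),
  lambda_aut tA -> lambda_embedding tN tA f ->
  (forall a, exists n, a - tA a = f n) ->
  (forall a, a - tA a = 0 -> exists n, a = f n) ->
  (#|N| - #|[set (a - tA a)%R | a : A]| <= k)%N ->
  exists (M : finZmodType) (tM : M -> M) (g : N -> M),
   [/\ lambda_aut tM, lambda_embedding tN tM g,
       (forall m, exists n, m - tM m = g n),
       (forall n, exists m, g n = m - tM m) &
       (forall m, m - tM m = 0 -> exists n, m = g n)].
Proof.
elim: k => [|k IH] A tA f hA hf h1 h2 hk;
  (case: (boolP [forall n, [exists a, f n == a - tA a]]) =>
     [/forallP hall | /forallPn [n /existsPn hn]];
   [exists A, tA, f; split => // n; case/existsP: (hall n) => a /eqP ->; by exists a|]);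
  case: (one_step hA hf h1 h2 hn) => B [tB [g [hB hg h1' h2' hlt]]].
  by move: hk hlt; rewrite leqn0 => /eqP ->.
apply: (IH B tB g) => //.
by rewrite -ltnS; apply: leq_trans hk.
Qed.

Lemma card_setE (T : finType) (P : pred T) :
  #|[set x | P x]| = (\sum_(x : T) (P x : nat))%N.
Proof.
by rewrite -sum1dep_card big_mkcond; apply: eq_bigr => x _; case: (P x).
Qed.

Lemma forward (N : finZmodType) (tN : N -> N) (hN : lambda_aut tN) (l : nat)
  (M : zmodType) (tM : M -> M) (f : N -> M) :
  lambda_aut tM -> lambda_embedding tN tM f ->
  (forall m, exists n, m - tM m = f n) ->
  (forall n, exists m, f n = m - tM m) ->
  quot_card (fun m : M => exists n : N, m = f n) l ->
  (#|N| %/ #|[set (x - tN x)%R | x : N]| %| l)%N.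
Proof.
case=> tMadd _ [fadd [finj ft]] h1 h2 [r hr].
case: hN => tNadd _.
set K := [set (x - tN x)%R | x : N].
have KB a b : a \in K -> b \in K -> a - b \in K.
  case/imsetP=> x _ -> /imsetP [y _ ->]; apply/imsetP; exists (x - y) => //.
  by rewrite (add_fB tNadd) !opprB [LHS]addrACA [RHS]addrACA [- tN x - y]addrC.
have K0 : 0 \in K by apply/imsetP; exists 0 => //; rewrite (add_f0 tNadd) subr0.
have phiD a b : (a + b) - tM (a + b) = (a - tM a) + (b - tM b).
  by rewrite tMadd opprD addrACA.
have phiN b : (- b) - tM (- b) = - (b - tM b).
  by rewrite (add_fN tMadd) opprK opprB addrC.
pose c i := odflt 0 [pick n | f n == r i - tM (r i)].
have hc i : f (c i) = r i - tM (r i).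
  rewrite /c; case: pickP => [n /eqP //|].
  by case: (h1 (r i)) => n hn /(_ n); rewrite hn eqxx.
pose a n := #|[set i : 'I_l | c i - n \in K]|.
have ha n : a n = a 0.
  case: (h2 n) => m hm.
  pose sig i := odflt i [pick j : 'I_l | [exists n', r i + m - r j == f n']].
  have hsig i : exists n', r i + m - r (sig i) = f n'.
    rewrite /sig; case: pickP => [j /existsP [n' /eqP hn']|]; first by exists n'.
    case: (hr (r i + m)) => j [[n' hn'] _] /(_ j) /existsP [].
    by exists n'; rewrite hn'.
  have sig_inj : injective sig.
    move=> i i' e.
    case: (hsig i) => n1 e1; case: (hsig i') => n2 e2.
    case: (hr (r i)) => i0 [_ u].
    rewrite -(u i); last by exists 0; rewrite subrr add_f0.
    apply: u; exists (n1 - n2); rewrite (add_fB fadd) -e1 -e2 e.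
    by rewrite opprB addrA subrK [r i' + m]addrC addrKA.
  have key i : exists k, k \in K /\ c (sig i) = c i + n - k.
    case: (hsig i) => n1 e1; exists (n1 - tN n1); split; first exact: imset_f.
    apply: finj; rewrite hc !(add_fB fadd) fadd hc hm (ft n1).
    have -> : r (sig i) = r i + m - f n1 by rewrite -e1 opprB addrC subrK.
    by rewrite !phiD phiN.
  rewrite /a -(card_preimset _ sig_inj); apply: eq_card => i; rewrite !inE.
  case: (key i) => k [hk ->].
  have -> : c i + n - k - n = c i - k by rewrite addrAC addrK.
  rewrite subr0; apply/idP/idP => h.
    have -> : c i = (c i - k) - (0 - k) by rewrite sub0r opprK subrK.
    by rewrite KB // KB.
  exact: KB.
have hrow i : #|[set n | c i - n \in K]| = #|K|.
  have -> : [set n | c i - n \in K] = [set c i - k | k in K].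
    apply/setP => n; rewrite inE; apply/idP/imsetP => [h | [k hk ->]].
      by exists (c i - n) => //; rewrite opprB addrC subrK.
    by rewrite opprB addrC subrK.
  by rewrite card_imset //; move=> u v /= /addrI /oppr_inj.
have hsum : (l * #|K| = #|N| * a 0%R)%N.
  transitivity (\sum_(i : 'I_l) #|[set n | (c i - n)%R \in K]|)%N.
    by rewrite (eq_bigr _ (fun i _ => hrow i)) sum_nat_const card_ord.
  transitivity (\sum_(n : N) a n)%N.
    rewrite /a; under eq_bigr => i _ do rewrite card_setE.
    under [in RHS]eq_bigr => n _ do rewrite card_setE.
    exact: exchange_big.
  by rewrite (eq_bigr _ (fun n _ => ha n)) sum_nat_const.
have pN u v : (u + v) - tN (u + v) = (u - tN u) + (v - tN v).
  by rewrite tNadd opprD addrACA.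
have hfib := @card_fib N (fun x => x - tN x) pN.
simpl in hfib.
have Kpos : (0 < #|K|)%N by apply/card_gt0P; exists 0.
rewrite {1}hfib mulKn //.
move: hsum; rewrite {1}hfib -mulnA [in RHS]mulnC => /eqP.
rewrite eqn_pmul2r // => /eqP ->; exact: dvdn_mulr.
Qed.
Theorem mainTheorem8 (N : finZmodType) (tN : N -> N) (hN : lambda_aut tN)
  (l : nat) (hl : (0 < l)%N) :
  (exists (M : zmodType) (tM : M -> M) (f : N -> M),
      [/\ lambda_aut tM, lambda_embedding tN tM f,
          (* (1 - t) M = N *)
          (forall m : M, exists n : N, m - tM m = f n),
          (forall n : N, exists m : M, f n = m - tM m) &
          (* |M / N| = l *)
          quot_card (fun m : M => exists n : N, m = f n) l])
  <-> ((#|N| %/ #|[set (x - tN x)%R | x : N]|) %| l)%N.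
Proof.
split.
  by case=> M [tM [f [hM hf h1 h2 hq]]]; apply: (@forward N tN hN l M tM f).
have hN' := hN; case: hN' => tNadd _.
set K := [set (x - tN x)%R | x : N].
pose kerN := [set x : N | x - tN x == 0].
have pN u v : (u + v) - tN (u + v) = (u - tN u) + (v - tN v).
  by rewrite tNadd opprD addrACA.
have hfib := @card_fib N (fun x => x - tN x) pN; simpl in hfib.
have Kpos : (0 < #|K|)%N.
  by apply/card_gt0P; exists 0; apply/imsetP; exists 0 => //; rewrite (add_f0 tNadd) subr0.
rewrite {1}hfib mulKn // => /dvdnP [a1 hl1].
move: hl1 hl; case: a1 => [-> //|a1] hl1 _.
have [M0 [tM0 [g0 [hM0 hg0 h1 h2 h3]]]] :
  exists (M : finZmodType) (tM : M -> M) (g : N -> M),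
   [/\ lambda_aut tM, lambda_embedding tN tM g,
       (forall m, exists n, m - tM m = g n),
       (forall n, exists m, g n = m - tM m) &
       (forall m, m - tM m = 0 -> exists n, m = g n)].
  apply: (@iterate N tN #|N| N tN id) => //.
  - split; first by []. by split.
  - by move=> a; exists (a - tN a).
  - by move=> a _; exists a.
  - exact: leq_subr.
have hM0' := hM0; case: hM0' => tM0add _.
case: hg0 => g0add [g0inj g0t].
have hn0 : (0 : M0) - tM0 0 = 0 *+ a1.+1 by rewrite (add_f0 tM0add) subr0 mul0rn.
case: (step hM0 hn0) => M [tM [g [hM hg cardM hsur hphi]]].
have hM' := hM; case: hM' => tMadd _.
case: hg => gadd [ginj gt].
exists M, tM, (g \o g0); split => //.
- split; first by move=> u v /=; rewrite g0add gadd.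
  split; first exact: inj_comp.
  by move=> u /=; rewrite g0t gt.
- move=> m; case: (hphi m) => a [i [-> _]]; case: (h1 a) => n hn.
  by exists n; rewrite mul0rn addr0 hn.
- move=> n; case: (h2 n) => m0 hm0; exists (g m0) => /=.
  by rewrite hm0 (add_fB gadd) gt.
apply: quot_card_fin.
- by move=> u v /=; rewrite g0add gadd.
- exact: inj_comp.
have e1 : [set (m - tM0 m)%R | m : M0] = [set g0 n | n : N].
  apply/setP => m; apply/imsetP/imsetP => -[x _ ->].
    by case: (h1 x) => n ->; exists n.
  by case: (h2 x) => m0 ->; exists m0.
have e2 : [set m : M0 | m - tM0 m == 0] = [set g0 n | n in kerN].
  apply/setP => m; rewrite inE; apply/eqP/imsetP.
    move=> hm; case: (h3 m hm) => n en; exists n => //.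
    rewrite inE; apply/eqP; apply: g0inj.
    by rewrite (add_fB g0add) g0t -en hm (add_f0 g0add).
  case=> n; rewrite inE => /eqP hn ->.
  by rewrite -g0t -(add_fB g0add) hn (add_f0 g0add).
have pM0 u v : (u + v) - tM0 (u + v) = (u - tM0 u) + (v - tM0 v).
  by rewrite tM0add opprD addrACA.
have hfib0 := @card_fib M0 (fun x => x - tM0 x) pM0; simpl in hfib0.
rewrite e1 e2 !card_imset // in hfib0.
rewrite cardM hfib0 hl1 -/kerN.
by rewrite mulnC [(#|N| * _)%N]mulnC mulnA.
Qed.
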